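(* Let $\mathfrak{g}=\mathfrak{sl}_3\oplus\mathfrak{sl}_3\oplus\mathfrak{sl}_3$ over an algebraically closed field $\mathbb{K}$ of characteristic zero and let $\mathfrak{h}=\{(x,x,x):x\in\mathfrak{sl}_3\}$ be the diagonal subalgebra. Then $c(\mathfrak{g},\mathfrak{h})=1$ and $\mathrm{rk}(\mathfrak{g},\mathfrak{h})=6$.
   Context: Complexity of a pair: for a reductive Lie algebra $\mathfrak{g}$ over $\mathbb{K}$, let $G$ be a connected algebraic group with Lie algebra $\mathfrak{g}$ acting on $\mathfrak{g}$ by the adjoint action $\mathrm{Ad}$, and let $\mathfrak{b}$ be a Borel subalgebra of $\mathfrak{g}$. For a subalgebra $\mathfrak{h}\subseteq\mathfrak{g}$, the complexity $c(\mathfrak{g},\mathfrak{h})$ is the minimum over $g\in G$ of $\operatorname{codim}_{\mathfrak{g}}(\mathfrak{h}+\mathrm{Ad}(g)\mathfrak{b})$. Rank of a pair: $\mathrm{rk}(\mathfrak{g},\mathfrak{h})$ is the rank of the homogeneous space $G/H$, where $H\subseteq G$ is the connected subgroup with Lie algebra $\mathfrak{h}$, i.e. the rank of the lattice of weights of $B$-semi-invariant rational functions on $G/H$, $B\subseteq G$ a Borel subgroup. *)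

(* Defs.v *)
From HB Require Import structures.
From mathcomp Require Import all_boot all_order all_algebra.
Set Implicit Arguments. Unset Strict Implicit. Unset Printing Implicit Defensive.
Import Order.TTheory GRing.Theory Num.Theory.
Local Open Scope ring_scope.

(* Elements of gl_3^3 (ambient of g = sl_3^3) and of SL_3^3 are triples of 3x3 matrices. *)
Definition trip (K : fieldType) := ('M[K]_3 * 'M[K]_3 * 'M[K]_3)%type.

Definition comp (K : fieldType) (t : trip K) (k : 'I_3) : 'M[K]_3 :=
  if k == 0%N :> nat then t.1.1 else if k == 1%N :> nat then t.1.2 else t.2.

Definition tmul (K : fieldType) (s t : trip K) : trip K :=
  (s.1.1 *m t.1.1, s.1.2 *m t.1.2, s.2 *m t.2).
Definition tinv (K : fieldType) (t : trip K) : trip K :=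
  (invmx t.1.1, invmx t.1.2, invmx t.2).
Definition tdiag (K : fieldType) (X : 'M[K]_3) : trip K := (X, X, X).

Definition inSL3 (K : fieldType) (X : 'M[K]_3) : bool := \det X == 1.
Definition inG (K : fieldType) (t : trip K) : bool :=
  [&& inSL3 t.1.1, inSL3 t.1.2 & inSL3 t.2].
Definition upper (K : fieldType) (X : 'M[K]_3) : bool :=
  [forall i : 'I_3, forall j : 'I_3, (j < i)%N ==> (X i j == 0)].
Definition inB (K : fieldType) (t : trip K) : bool :=
  inG t && [forall k : 'I_3, upper (comp t k)].

Definition trace_form (K : fieldType) (X : 'M[K]_3) : 'M[K]_1 := (\tr X)%:M.
Definition lower_part (K : fieldType) (X : 'M[K]_3) : 'M[K]_3 :=
  \matrix_(i, j) (if (j < i)%N then X i j else 0).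

Definition sl3 (K : fieldType) : {vspace 'M[K]_3} := lker (linfun (@trace_form K)).
Definition b3 (K : fieldType) : {vspace 'M[K]_3} :=
  (sl3 K :&: lker (linfun (@lower_part K)))%VS.

Definition inj1 (K : fieldType) (X : 'M[K]_3) : trip K := (X, 0, 0).
Definition inj2 (K : fieldType) (X : 'M[K]_3) : trip K := (0, X, 0).
Definition inj3 (K : fieldType) (X : 'M[K]_3) : trip K := (0, 0, X).

Definition gLie (K : fieldType) : {vspace trip K} :=
  (linfun (@inj1 K) @: sl3 K + linfun (@inj2 K) @: sl3 K + linfun (@inj3 K) @: sl3 K)%VS.
Definition bLie (K : fieldType) : {vspace trip K} :=
  (linfun (@inj1 K) @: b3 K + linfun (@inj2 K) @: b3 K + linfun (@inj3 K) @: b3 K)%VS.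
Definition hdiag (K : fieldType) : {vspace trip K} := (linfun (@tdiag K) @: sl3 K)%VS.

Definition Ad (K : fieldType) (g : trip K) (t : trip K) : trip K :=
  (g.1.1 *m t.1.1 *m invmx g.1.1, g.1.2 *m t.1.2 *m invmx g.1.2, g.2 *m t.2 *m invmx g.2).

Definition codim_at (K : fieldType) (h : {vspace trip K}) (g : trip K) : nat :=
  (\dim (gLie K) - \dim (h + linfun (Ad g) @: bLie K))%N.

Definition is_complexity (K : fieldType) (h : {vspace trip K}) (c : nat) : Prop :=
  (exists2 g, inG g & codim_at h g = c) /\ (forall g, inG g -> (c <= codim_at h g)%N).

Inductive polyfun (K : fieldType) : (trip K -> K) -> Prop :=
| pf_const (c : K) : polyfun (fun _ => c)
| pf_coord (k i j : 'I_3) : polyfun (fun t => comp t k i j)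
| pf_add (p q : trip K -> K) : polyfun p -> polyfun q -> polyfun (fun t => p t + q t)
| pf_mul (p q : trip K -> K) : polyfun p -> polyfun q -> polyfun (fun t => p t * q t).

(* A rational function on G is p/q with p, q regular and q not identically 0 on G
   (G is irreducible, so identities of rational functions are checked as
   polynomial identities after clearing denominators, pointwise on G). *)
Definition ratfun (K : fieldType) (p q : trip K -> K) : Prop :=
  [/\ polyfun p, polyfun q & exists2 g, inG g & q g != 0].

(* H = diagonal SL_3 in G (connected subgroup with Lie algebra hdiag);
   K(G/H) = right-H-invariant rational functions on G. *)
Definition rightH_inv (K : fieldType) (p q : trip K -> K) : Prop :=
  forall g x, inG g -> inSL3 x ->
    p (tmul g (tdiag x)) * q g = p g * q (tmul g (tdiag x)).

(* Characters of B (they factor through T = diagonal); for SL_3 every character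
   of T is uniquely t |-> t_00^a t_11^b, so X(B) = Z^6, lambda : 'rV[int]_6. *)
Definition widx (k : 'I_3) (i : 'I_2) : 'I_6 := inord (2 * k + i).
Definition widx_row (i : 'I_2) : 'I_3 := widen_ord (isT : (2 <= 3)%N) i.
Definition character (K : fieldType) (lam : 'rV[int]_6) (b : trip K) : K :=
  \prod_(k < 3) \prod_(i < 2) (comp b k (widx_row i) (widx_row i)) ^ (lam 0 (widx k i)).

Definition is_weight (K : fieldType) (lam : 'rV[int]_6) : Prop :=
  exists p q : trip K -> K,
    [/\ ratfun p q, rightH_inv p q, (exists2 g, inG g & p g != 0) &
        forall b g, inB b -> inG g ->
          p (tmul (tinv b) g) * q g = character lam b * p g * q (tmul (tinv b) g)].

Definition in_set_rows (L : 'rV[int]_6 -> Prop) (r : nat) (M : 'M[rat]_(r, 6)) : Prop :=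
  forall i : 'I_r, exists2 lam, L lam & row i M = map_mx (fun z : int => z%:~R) lam.
Definition has_rank (L : 'rV[int]_6 -> Prop) (r : nat) : Prop :=
  (exists M : 'M[rat]_(r, 6), in_set_rows L M /\ row_free M) /\
  (forall M : 'M[rat]_(r.+1, 6), in_set_rows L M -> ~~ row_free M).

Definition rank_GH (K : fieldType) (r : nat) : Prop := has_rank (@is_weight K) r.

(* Main.v *)
Require Import Defs.
From HB Require Import structures.
From mathcomp Require Import all_boot all_order all_algebra.
From mathcomp Require Import ring zify.
Set Implicit Arguments. Unset Strict Implicit. Unset Printing Implicit Defensive.
Import GRing.Theory.
Local Open Scope ring_scope.

Definition o0 : 'I_3 := @Ordinal 3 0 isT.
Definition o1 : 'I_3 := @Ordinal 3 1 isT.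
Definition o2 : 'I_3 := @Ordinal 3 2 isT.

Definition mxn (R : Type) m n (A : 'M[R]_(m.+1, n.+1)) (i j : nat) := A (inord i) (inord j).
Lemma mxnE (R : Type) m n (A : 'M[R]_(m.+1, n.+1)) i j : A i j = mxn A i j.
Proof. by rewrite /mxn !inord_val. Qed.

Definition det3f (R : comNzRingType) (a b c : 'I_3 -> R) : R :=
  a o0 * b o1 * c o2 + (-1) * (a o0 * b o2 * c o1)
  + (-1) * (a o1 * b o0 * c o2) + a o1 * b o2 * c o0
  + a o2 * b o0 * c o1 + (-1) * (a o2 * b o1 * c o0).

Lemma det3E (R : comNzRingType) (A : 'M[R]_3) :
  \det A = det3f (A o0) (A o1) (A o2).
Proof.
rewrite (expand_det_row _ o0) !big_ord_recr big_ord0 /= /cofactor.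
rewrite !(expand_det_row _ ord0) !big_ord_recr !big_ord0 /= /cofactor.
rewrite !det_mx11 !mxE /det3f !(mxnE A) /=.
ring.
Qed.
Section R.
Variable K : fieldType.

Lemma comp_tmul (s t : trip K) k : Defs.comp (tmul s t) k = Defs.comp s k *m Defs.comp t k.
Proof. by rewrite /Defs.comp /tmul; case: ifP => //; case: ifP. Qed.
Lemma comp_tdiag (x : 'M[K]_3) k : Defs.comp (tdiag x) k = x.
Proof. by rewrite /Defs.comp /tdiag; case: ifP => //; case: ifP. Qed.

Lemma det3_mulr (A B C x : 'M[K]_3) r s u :
  det3f ((A *m x) r) ((B *m x) s) ((C *m x) u) = det3f (A r) (B s) (C u) * \det x.
Proof.
rewrite det3E /det3f !mxE !big_ord_recr !big_ord0 /= !(mxnE A) !(mxnE B) !(mxnE C) !(mxnE x) /=.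
ring.
Qed.

Definition upperP (b : 'M[K]_3) := [/\ b o1 o0 = 0, b o2 o0 = 0 & b o2 o1 = 0].

Lemma upperE b : upper b -> upperP b.
Proof.
move=> /forallP H; split.
- by have /forallP/(_ o0)/implyP/(_ isT)/eqP := H o1.
- by have /forallP/(_ o0)/implyP/(_ isT)/eqP := H o2.
- by have /forallP/(_ o1)/implyP/(_ isT)/eqP := H o2.
Qed.

Lemma pair_left (b c A B : 'M[K]_3) : upperP b -> upperP c ->
  det3f ((b *m A) o2) ((c *m B) o1) ((c *m B) o2) =
  b o2 o2 * c o1 o1 * c o2 o2 * det3f (A o2) (B o1) (B o2).
Proof.
case=> b10 b20 b21 [c10 c20 c21].
rewrite /det3f !mxE !big_ord_recr !big_ord0 /=.
rewrite !(mxnE b) !(mxnE c) !(mxnE A) !(mxnE B) /=.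
move: b10 b20 b21 c10 c20 c21; rewrite !(mxnE b) !(mxnE c) /= => e1 e2 e3 e4 e5 e6.
rewrite ?e1 ?e2 ?e3 ?e4 ?e5 ?e6; ring.
Qed.

Lemma D_left (b c d A B C : 'M[K]_3) : upperP b -> upperP c -> upperP d ->
  det3f ((b *m A) o2) ((c *m B) o2) ((d *m C) o2) =
  b o2 o2 * c o2 o2 * d o2 o2 * det3f (A o2) (B o2) (C o2).
Proof.
case=> b10 b20 b21 [c10 c20 c21] [d10 d20 d21].
rewrite /det3f !mxE !big_ord_recr !big_ord0 /=.
rewrite !(mxnE b) !(mxnE c) !(mxnE d) !(mxnE A) !(mxnE B) !(mxnE C) /=.
move: b10 b20 b21 c10 c20 c21 d10 d20 d21; rewrite !(mxnE b) !(mxnE c) !(mxnE d) /= => e1 e2 e3 e4 e5 e6 e7 e8 e9.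
rewrite ?e1 ?e2 ?e3 ?e4 ?e5 ?e6 ?e7 ?e8 ?e9; ring.
Qed.

Lemma det_upper (b : 'M[K]_3) : upperP b -> \det b = b o0 o0 * b o1 o1 * b o2 o2.
Proof.
case=> b10 b20 b21; rewrite det3E /det3f b10 b20 b21; ring.
Qed.
End R.


Section R.
Variable K : fieldType.

Lemma val_widx (k : 'I_3) (i : 'I_2) : nat_of_ord (widx k i) = (2 * k + i)%N.
Proof. rewrite /widx inordK //; have := ltn_ord k; have := ltn_ord i; lia. Qed.

Lemma charE (wf : nat -> int) (b : trip K) :
  character (\row_(j < 6) wf j) b =
  (b.1.1 o0 o0) ^ wf 0%N * (b.1.1 o1 o1) ^ wf 1%N *
  (b.1.2 o0 o0) ^ wf 2%N * (b.1.2 o1 o1) ^ wf 3%N *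
  (b.2 o0 o0) ^ wf 4%N * (b.2 o1 o1) ^ wf 5%N.
Proof.
rewrite /character !big_ord_recr !big_ord0 /= !mxE !val_widx /=.
rewrite /widx_row /Defs.comp /=.
rewrite !(mxnE b.1.1) !(mxnE b.1.2) !(mxnE b.2) /=.
by rewrite !mul1r !mulrA.
Qed.
End R.


Section R.
Variable K : fieldType.

Lemma tmulK (b g : trip K) : inG b -> tmul b (tmul (tinv b) g) = g.
Proof.
case: b => [[b1 b2] b3]; case: g => [[g1 g2] g3].
case/and3P => /eqP d1 /eqP d2 /eqP d3.
rewrite /tmul /tinv /= !mulKVmx // unitmxE ?d1 ?d2 ?d3 unitr1 //.
Qed.

Lemma inG1 : inG ((1%:M, 1%:M, 1%:M) : trip K).
Proof. by rewrite /inG /inSL3 /= det1 eqxx. Qed.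

Lemma weight_gen (lam : 'rV[int]_6) (p : trip K -> K) :
 polyfun p ->
 (forall g x, inSL3 x -> p (tmul g (tdiag x)) = p g) ->
 (exists2 g, inG g & p g != 0) ->
 (forall b g, inB b -> character lam b * p (tmul b g) = p g) ->
 is_weight K lam.
Proof.
move=> pp Hr Hnz Hs; exists p, (fun _ => 1); split => //.
- split => //; first exact: pf_const.
  by exists (1%:M, 1%:M, 1%:M) => //; [exact: inG1 | exact: oner_neq0].
- by move=> g x _ Hx; rewrite !mulr1 Hr.
- move=> b g Hb Hg; rewrite !mulr1.
  have Hb' : inG b by case/andP: Hb.
  by rewrite -{2}(tmulK g Hb') Hs.
Qed.

Lemma polyfun_det3 (k1 k2 k3 r1 r2 r3 : 'I_3) :
  polyfun (fun t : trip K => det3f (Defs.comp t k1 r1) (Defs.comp t k2 r2) (Defs.comp t k3 r3)).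
Proof.
rewrite /det3f.
repeat first [apply: pf_add | apply: pf_mul | apply: pf_const | apply: pf_coord].
Qed.

Lemma uB (b : trip K) k : inB b -> upperP (Defs.comp b k).
Proof. by case/andP => _ /forallP /(_ k) /upperE. Qed.

Lemma detB (b : trip K) k : inB b ->
  (Defs.comp b k) o0 o0 * (Defs.comp b k) o1 o1 * (Defs.comp b k) o2 o2 = 1.
Proof.
move=> Hb; rewrite -det_upper; last exact: uB.
case/andP: Hb => /and3P [/eqP d1 /eqP d2 /eqP d3] _.
by rewrite /Defs.comp; case: ifP => _; [|case: ifP].
Qed.

Definition Pf (i j : 'I_3) (t : trip K) := det3f (Defs.comp t i o2) (Defs.comp t j o1) (Defs.comp t j o2).
Definition Df (t : trip K) := det3f (Defs.comp t o0 o2) (Defs.comp t o1 o2) (Defs.comp t o2 o2).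

Lemma pair_weight i j (wf : nat -> int) :
  (forall b : trip K, inB b -> character (\row_k wf k) b *
      ((Defs.comp b i) o2 o2 * (Defs.comp b j) o1 o1 * (Defs.comp b j) o2 o2) = 1) ->
  (exists2 g, inG g & Pf i j g != 0) -> is_weight K (\row_k wf k).
Proof.
move=> Hc Hnz; apply: (weight_gen (p := Pf i j)) => //.
- exact: polyfun_det3.
- move=> g x /eqP dx; rewrite /Pf !comp_tmul !comp_tdiag det3_mulr dx mulr1 //.
- move=> b g Hb; rewrite /Pf !comp_tmul pair_left; [|exact: uB|exact: uB].
  by rewrite mulrA Hc // mul1r.
Qed.

Lemma D_weight (wf : nat -> int) :
  (forall b : trip K, inB b -> character (\row_k wf k) b *
      ((Defs.comp b o0) o2 o2 * (Defs.comp b o1) o2 o2 * (Defs.comp b o2) o2 o2) = 1) ->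
  (exists2 g, inG g & Df g != 0) -> is_weight K (\row_k wf k).
Proof.
move=> Hc Hnz; apply: (weight_gen (p := Df)) => //.
- exact: polyfun_det3.
- move=> g x /eqP dx; rewrite /Df !comp_tmul !comp_tdiag det3_mulr dx mulr1 //.
- move=> b g Hb; rewrite /Df !comp_tmul D_left; [|exact: uB|exact: uB|exact: uB].
  by rewrite mulrA Hc // mul1r.
Qed.

Definition cyc : 'M[K]_3 := \matrix_(i, j) ((nat_of_ord j == (nat_of_ord i).+1 %% 3)%N)%:R.
Definition cyc2 : 'M[K]_3 := \matrix_(i, j) ((nat_of_ord j == (nat_of_ord i).+2 %% 3)%N)%:R.

Lemma det_cyc : \det cyc = 1.
Proof. rewrite det3E /det3f !mxE /=. ring. Qed.
Lemma det_cyc2 : \det cyc2 = 1.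
Proof. rewrite det3E /det3f !mxE /=. ring. Qed.

Lemma ne0_of1 (x : K) : x = 1 -> x != 0.
Proof. by move->; exact: oner_neq0. Qed.
Lemma eq1_2 (x a b : K) : x = a * b -> a = 1 -> b = 1 -> x = 1.
Proof. by move=> -> -> ->; rewrite mulr1. Qed.
Lemma eq1_3 (x a b c : K) : x = a * b * c -> a = 1 -> b = 1 -> c = 1 -> x = 1.
Proof. by move=> -> -> -> ->; rewrite !mulr1. Qed.

Definition wfl (l : seq int) (n : nat) : int := nth 0 l n.

Lemma W01 : is_weight K (\row_k wfl [:: Posz 1; Posz 1; Posz 1; Posz 0; Posz 0; Posz 0] k).
Proof.
apply: (pair_weight (i := o0) (j := o1)).
- move=> b Hb; rewrite charE /wfl /= /exprz.
  apply: (eq1_2 _ (detB o0 Hb) (detB o1 Hb)); rewrite /=; ring.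
- exists (cyc, 1%:M, 1%:M); first by rewrite /inG /inSL3 /= det_cyc det1 eqxx.
  rewrite /Pf /det3f /= !mxE /=; apply: ne0_of1; ring.
Qed.
Lemma W02 : is_weight K (\row_k wfl [:: Posz 1; Posz 1; Posz 0; Posz 0; Posz 1; Posz 0] k).
Proof.
apply: (pair_weight (i := o0) (j := o2)).
- move=> b Hb; rewrite charE /wfl /= /exprz.
  apply: (eq1_2 _ (detB o0 Hb) (detB o2 Hb)); rewrite /=; ring.
- exists (cyc, 1%:M, 1%:M); first by rewrite /inG /inSL3 /= det_cyc det1 eqxx.
  rewrite /Pf /det3f /= !mxE /=; apply: ne0_of1; ring.
Qed.

Lemma W10 : is_weight K (\row_k wfl [:: Posz 1; Posz 0; Posz 1; Posz 1; Posz 0; Posz 0] k).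
Proof.
apply: (pair_weight (i := o1) (j := o0)).
- move=> b Hb; rewrite charE /wfl /= /exprz.
  apply: (eq1_2 _ (detB o1 Hb) (detB o0 Hb)); rewrite /=; ring.
- exists (1%:M, cyc, 1%:M); first by rewrite /inG /inSL3 /= det_cyc det1 eqxx.
  rewrite /Pf /det3f /= !mxE /=; apply: ne0_of1; ring.
Qed.

Lemma W12 : is_weight K (\row_k wfl [:: Posz 0; Posz 0; Posz 1; Posz 1; Posz 1; Posz 0] k).
Proof.
apply: (pair_weight (i := o1) (j := o2)).
- move=> b Hb; rewrite charE /wfl /= /exprz.
  apply: (eq1_2 _ (detB o1 Hb) (detB o2 Hb)); rewrite /=; ring.
- exists (1%:M, cyc, 1%:M); first by rewrite /inG /inSL3 /= det_cyc det1 eqxx.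
  rewrite /Pf /det3f /= !mxE /=; apply: ne0_of1; ring.
Qed.

Lemma W20 : is_weight K (\row_k wfl [:: Posz 1; Posz 0; Posz 0; Posz 0; Posz 1; Posz 1] k).
Proof.
apply: (pair_weight (i := o2) (j := o0)).
- move=> b Hb; rewrite charE /wfl /= /exprz.
  apply: (eq1_2 _ (detB o2 Hb) (detB o0 Hb)); rewrite /=; ring.
- exists (1%:M, 1%:M, cyc); first by rewrite /inG /inSL3 /= det_cyc det1 eqxx.
  rewrite /Pf /det3f /= !mxE /=; apply: ne0_of1; ring.
Qed.

Lemma WD : is_weight K (\row_k wfl [:: Posz 1; Posz 1; Posz 1; Posz 1; Posz 1; Posz 1] k).
Proof.
apply: D_weight.
- move=> b Hb; rewrite charE /wfl /= /exprz.
  apply: (eq1_3 _ (detB o0 Hb) (detB o1 Hb) (detB o2 Hb)); rewrite /=; ring.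
- exists (1%:M, cyc, cyc2); first by rewrite /inG /inSL3 /= det_cyc det_cyc2 det1 eqxx.
  rewrite /Df /det3f /= !mxE /=; apply: ne0_of1; ring.
Qed.

Definition rowsW : seq (seq int) :=
  [:: [:: Posz 1; Posz 1; Posz 1; Posz 0; Posz 0; Posz 0];
      [:: Posz 1; Posz 1; Posz 0; Posz 0; Posz 1; Posz 0];
      [:: Posz 1; Posz 0; Posz 1; Posz 1; Posz 0; Posz 0];
      [:: Posz 0; Posz 0; Posz 1; Posz 1; Posz 1; Posz 0];
      [:: Posz 1; Posz 0; Posz 0; Posz 0; Posz 1; Posz 1];
      [:: Posz 1; Posz 1; Posz 1; Posz 1; Posz 1; Posz 1]].
Definition LW : 'M[int]_6 := \matrix_(i < 6, j < 6) wfl (nth [::] rowsW i) j.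

Lemma LW_rows (i : 'I_6) : is_weight K (row i LW).
Proof.
have E : forall l, (nth [::] rowsW i = l) -> row i LW = \row_k wfl l k.
  by move=> l El; apply/rowP => k; rewrite !mxE El.
case: i E => [[|[|[|[|[|[|//]]]]]] Hi] /= E.
- by rewrite (E _ erefl); exact: W01.
- by rewrite (E _ erefl); exact: W02.
- by rewrite (E _ erefl); exact: W10.
- by rewrite (E _ erefl); exact: W12.
- by rewrite (E _ erefl); exact: W20.
- by rewrite (E _ erefl); exact: WD.
Qed.
End R.


Definition rowsB : seq (seq int) :=
  [:: [:: 0; 1; 2; -1; 1; -1];
      [:: 0; 1; -1; -1; -2; 2];
      [:: 3; -2; -1; 2; 1; -1];
      [:: -3; 1; 2; -1; -2; 2];
      [:: 0; 1; -1; 2; 1; -1];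
      [:: 0; -2; -1; -1; 1; 2]]%Z.
Definition BW : 'M[rat]_6 := \matrix_(i < 6, j < 6) ((nth 0 (nth [::] rowsB i) j)%:~R).

Lemma MB3 : map_mx (fun z : int => z%:~R : rat) LW *m BW = 3%:M.
Proof.
apply/matrixP => i j; rewrite !mxE !big_ord_recr big_ord0 /=.
case: i => [[|[|[|[|[|[|//]]]]]] Hi]; case: j => [[|[|[|[|[|[|//]]]]]] Hj];
  rewrite !mxE /= /wfl /=; ring.
Qed.

Lemma rankW (K : fieldType) : rank_GH K 6.
Proof.
split.
- exists (map_mx (fun z : int => z%:~R : rat) LW); split.
  + move=> i; exists (row i LW); first exact: LW_rows.
    by rewrite map_row.
  + apply/row_freeP; exists (3^-1 *: BW).
    by rewrite -scalemxAr MB3 scale_scalar_mx mulVf.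
- move=> M _; rewrite /row_free; apply/negP => /eqP H.
  by have := rank_leq_col M; rewrite H.
Qed.


Lemma inj1_lin (K : fieldType) : linear (@inj1 K).
Proof. move=> a u v; rewrite /inj1 /=; congr (_, _, _); by rewrite /= ?scaler0 ?addr0. Qed.
Lemma inj2_lin (K : fieldType) : linear (@inj2 K).
Proof. move=> a u v; rewrite /inj2 /=; congr (_, _, _); by rewrite /= ?scaler0 ?addr0. Qed.
Lemma inj3_lin (K : fieldType) : linear (@inj3 K).
Proof. move=> a u v; rewrite /inj3 /=; congr (_, _, _); by rewrite /= ?scaler0 ?addr0. Qed.
Lemma tdiag_lin (K : fieldType) : linear (@tdiag K).
Proof. move=> a u v; rewrite /tdiag /=; congr (_, _, _). Qed.
Lemma Ad_lin (K : fieldType) (g : trip K) : linear (Ad g).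
Proof.
move=> a u v; rewrite /Ad /=; congr (_, _, _);
  rewrite /= mulmxDr mulmxDl -scalemxAr -scalemxAl //.
Qed.
Lemma trace_lin (K : fieldType) : linear (@trace_form K).
Proof.
move=> a u v; rewrite /trace_form; apply/matrixP => i j.
by rewrite !ord1 !mxE eqxx /= mxtraceD mxtraceZ !mulr1n.
Qed.
Lemma lower_lin (K : fieldType) : linear (@lower_part K).
Proof.
move=> a u v; rewrite /lower_part; apply/matrixP => i j.
by rewrite !mxE; case: ifP => _ //; rewrite mulr0 addr0.
Qed.

HB.instance Definition _ (K : fieldType) :=
  GRing.isLinear.Build K 'M[K]_3 (trip K) _ (@inj1 K) (@inj1_lin K).
HB.instance Definition _ (K : fieldType) :=
  GRing.isLinear.Build K 'M[K]_3 (trip K) _ (@inj2 K) (@inj2_lin K).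
HB.instance Definition _ (K : fieldType) :=
  GRing.isLinear.Build K 'M[K]_3 (trip K) _ (@inj3 K) (@inj3_lin K).
HB.instance Definition _ (K : fieldType) :=
  GRing.isLinear.Build K 'M[K]_3 (trip K) _ (@tdiag K) (@tdiag_lin K).
HB.instance Definition _ (K : fieldType) (g : trip K) :=
  GRing.isLinear.Build K (trip K) (trip K) _ (Ad g) (@Ad_lin K g).
HB.instance Definition _ (K : fieldType) :=
  GRing.isLinear.Build K 'M[K]_3 'M[K]_1 _ (@trace_form K) (@trace_lin K).
HB.instance Definition _ (K : fieldType) :=
  GRing.isLinear.Build K 'M[K]_3 'M[K]_3 _ (@lower_part K) (@lower_lin K).

Section C.
Variable K : fieldType.

Lemma mem_sl3 (X : 'M[K]_3) : (X \in sl3 K) = (\tr X == 0).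
Proof.
rewrite /sl3 memv_ker lfunE /= /trace_form.
apply/eqP/eqP => [/matrixP /(_ 0 0)|->]; last by rewrite raddf0.
by rewrite !mxE eqxx mulr1n.
Qed.

Lemma mem_b3 (X : 'M[K]_3) : (X \in b3 K) = (\tr X == 0) && (lower_part X == 0).
Proof. by rewrite /b3 memv_cap mem_sl3 memv_ker lfunE. Qed.
End C.


Section D.
Variable K : fieldType.

Lemma dim_img_le (aT rT : vectType K) (f : 'Hom(aT, rT)) U : (\dim (f @: U) <= \dim U)%N.
Proof. by rewrite -(limg_ker_dim f U) leq_addl. Qed.

Lemma dim_ge1 (vT : vectType K) (U : {vspace vT}) v : v \in U -> v != 0 -> (0 < \dim U)%N.
Proof.
move=> Hv Hnz; rewrite lt0n dimv_eq0; apply/eqP => U0; move: Hv.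
by rewrite U0 memv0 (negbTE Hnz).
Qed.

Definition fnn (T : Type) n (f : 'I_n.+1 -> T) (i : nat) := f (inord i).
Lemma fnnE (T : Type) n (f : 'I_n.+1 -> T) i : f i = fnn f i.
Proof. by rewrite /fnn inord_val. Qed.

Lemma tr3 (A : 'M[K]_3) : \tr A = A o0 o0 + A o1 o1 + A o2 o2.
Proof. rewrite /mxtrace !big_ord_recr big_ord0 /= !(mxnE A) /=; ring. Qed.

Lemma dimM3 : \dim (fullv : {vspace 'M[K]_3}) = 9%N.
Proof. by rewrite dimvf /dim /=. Qed.
Lemma dimM1 : \dim (fullv : {vspace 'M[K]_1}) = 1%N.
Proof. by rewrite dimvf /dim /=. Qed.

Lemma dim_sl3 : \dim (sl3 K) = 8%N.
Proof.
have := limg_ker_dim (linfun (@trace_form K)) fullv.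
rewrite capfv dimM3 -/(sl3 K).
have -> : \dim (linfun (@trace_form K) @: fullv) = 1%N.
  apply/eqP; rewrite eqn_leq; apply/andP; split.
    by rewrite (leq_trans (dimvS (subvf _))) // dimM1.
  apply: (@dim_ge1 _ _ (trace_form (delta_mx 0 0))).
    by rewrite -lfunE; apply: memv_img; exact: memvf.
  apply/eqP => /matrixP /(_ 0 0); rewrite !mxE eqxx mulr1n tr3 !mxE /=.
  by move/eqP; rewrite !addr0 oner_eq0.
by move=> H; apply/eqP; rewrite -(eqn_add2r 1) H.
Qed.

Definition E10 : 'M[K]_3 := delta_mx o1 o0.
Definition E20 : 'M[K]_3 := delta_mx o2 o0.
Definition E21 : 'M[K]_3 := delta_mx o2 o1.

Lemma lp_span (X : 'M[K]_3) :
  lower_part X = X o1 o0 *: E10 + X o2 o0 *: E20 + X o2 o1 *: E21.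
Proof.
apply/matrixP => i j; rewrite !mxE.
case: i => [[|[|[|//]]] Hi]; case: j => [[|[|[|//]]] Hj]; rewrite /=.
all: rewrite !(mxnE X) /=; ring.
Qed.

Lemma free_E : free [tuple E10; E20; E21].
Proof.
apply/freeP => k Hk.
move/matrixP: Hk => Hk.
have h10 := Hk o1 o0; have h20 := Hk o2 o0; have h21 := Hk o2 o1.
move: h10 h20 h21; rewrite !big_ord_recr big_ord0 /= !mxE /=.
rewrite !mulr0 !mulr1 !add0r !addr0 => h10 h20 h21.
move: h10 h20 h21; rewrite !(fnnE k) /= => h10 h20 h21.
by case=> [[|[|[|//]]] Hi]; rewrite (fnnE k) /=.
Qed.

Lemma E_in (E : 'M[K]_3) : E \in [tuple E10; E20; E21] -> E \in (linfun (@lower_part K) @: sl3 K)%VS.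
Proof.
move=> HE; have -> : E = lower_part E.
  move: HE; rewrite !inE => /or3P [] /eqP ->;
  by apply/matrixP => i j; rewrite !mxE; case: i => [[|[|[|//]]] ?]; case: j => [[|[|[|//]]] ?].
rewrite -lfunE; apply: memv_img; rewrite mem_sl3 tr3.
move: HE; rewrite !inE => /or3P [] /eqP ->;
  by rewrite !mxE /= !addr0.
Qed.

Lemma dim_lp : \dim (linfun (@lower_part K) @: sl3 K) = 3%N.
Proof.
apply/eqP; rewrite eqn_leq; apply/andP; split.
- apply: (@leq_trans (\dim <<[tuple E10; E20; E21]>>)); last exact: dim_span.
  apply: dimvS; apply/subvP => y /memv_imgP [x _ ->]; rewrite lfunE /= lp_span.
  by rewrite !memvD // memvZ // memv_span // !inE eqxx ?orbT.
- have := free_E; rewrite /free /= => /eqP H.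
  apply: (@leq_trans (\dim <<[tuple E10; E20; E21]>>)); first by rewrite H.
  by apply: dimvS; apply/span_subvP => E; exact: E_in.
Qed.

Lemma dim_b3 : \dim (b3 K) = 5%N.
Proof.
have := limg_ker_dim (linfun (@lower_part K)) (sl3 K).
rewrite dim_lp dim_sl3 /b3 => H. by apply: (@addIn 3); exact: H.
Qed.
End D.


Section S.
Variable K : fieldType.

Lemma inj_dim (aT rT : vectType K) (f : {linear aT -> rT}) (injf : injective f) U :
  \dim (linfun f @: U) = \dim U.
Proof.
apply: limg_dim_eq.
have /eqP -> : lker (linfun f) == 0%VS by apply/lker0P => x y; rewrite !lfunE; exact: injf.
by rewrite capv0.
Qed.

Lemma inj1_inj : injective (@inj1 K). Proof. by move=> x y [] . Qed.
Lemma inj2_inj : injective (@inj2 K). Proof. by move=> x y [] . Qed.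
Lemma inj3_inj : injective (@inj3 K). Proof. by move=> x y [] . Qed.
Lemma tdiag_inj : injective (@tdiag K). Proof. by move=> x y [] . Qed.

Lemma sum3_dim (U V W : {vspace 'M[K]_3}) :
  \dim (linfun (@inj1 K) @: U + linfun (@inj2 K) @: V + linfun (@inj3 K) @: W)%VS =
  (\dim U + \dim V + \dim W)%N.
Proof.
rewrite dimv_disjoint_sum; last first.
  apply/eqP; rewrite -subv0; apply/subvP => t; rewrite memv_cap memv0.
  case/andP => /memv_addP [u /memv_imgP [x _ ->] [v /memv_imgP [y _ ->] ->]].
  case/memv_imgP => z _; rewrite !lfunE /inj1 /inj2 /inj3 /= => -[ex ey ez].
  by rewrite addr0 in ex; rewrite add0r in ey; rewrite ex ey !raddf0 addr0.
rewrite dimv_disjoint_sum; last first.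
  apply/eqP; rewrite -subv0; apply/subvP => t; rewrite memv_cap memv0.
  case/andP => /memv_imgP [x _ ->] /memv_imgP [y _].
  rewrite !lfunE /inj1 /inj2 /= => -[ex ey].
  by rewrite ex raddf0.
rewrite !inj_dim //; [exact: inj3_inj | exact: inj2_inj | exact: inj1_inj].
Qed.

Lemma dim_gLie : \dim (gLie K) = 24%N.
Proof. by rewrite /gLie sum3_dim dim_sl3. Qed.
Lemma dim_bLie : \dim (bLie K) = 15%N.
Proof. by rewrite /bLie sum3_dim dim_b3. Qed.
Lemma dim_hdiag : \dim (hdiag K) = 8%N.
Proof. by rewrite /hdiag inj_dim ?dim_sl3 //; exact: tdiag_inj. Qed.

End S.


Section W.
Variable K : fieldType.

Definition wmx : 'M[K]_3 := \matrix_(i, j)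
  (if (nat_of_ord i + nat_of_ord j == 2)%N then (if nat_of_ord i == 1%N then -1 else 1) else 0).
Definition umx : 'M[K]_3 := \matrix_(i, j)
  (if (nat_of_ord j == 0)%N || (i == j) then 1 else 0).

Lemma det_wmx : \det wmx = 1.
Proof. rewrite det3E /det3f !mxE /=; ring. Qed.
Lemma det_umx : \det umx = 1.
Proof. rewrite det3E /det3f !mxE /=; ring. Qed.

Lemma lowerP (s : 'M[K]_3) : lower_part s == 0 -> [/\ s o1 o0 = 0, s o2 o0 = 0 & s o2 o1 = 0].
Proof.
move/eqP/matrixP => H.
have h10 := H o1 o0; have h20 := H o2 o0; have h21 := H o2 o1.
by move: h10 h20 h21; rewrite !mxE /=.
Qed.

Lemma key (x s2 s3 : 'M[K]_3) : (3%:R : K) != 0 -> \tr x = 0 ->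
  lower_part x == 0 -> lower_part s2 == 0 -> lower_part s3 == 0 ->
  x *m wmx = wmx *m s2 -> x *m umx = umx *m s3 -> x = 0.
Proof.
move=> n3 tx /lowerP [x10 x20 x21] /lowerP [a10 a20 a21] /lowerP [b10 b20 b21] /matrixP E2 /matrixP E3.
have e1 := E2 o0 o0; have e2 := E2 o0 o1; have e3 := E2 o1 o0.
have e4 := E3 o0 o0; have e5 := E3 o1 o0; have e6 := E3 o2 o0.
move: e1 e2 e3 e4 e5 e6 tx x10 x20 x21 a10 a20 a21 b10 b20 b21.
rewrite tr3 !mxE !big_ord_recr !big_ord0 /= !mxE /=.
rewrite !(mxnE x) !(mxnE s2) !(mxnE s3) /=.
rewrite !(mul0r, mulr0, mul1r, mulr1, add0r, addr0).
move=> e1 e2 e3 e4 e5 e6 tx x10 x20 x21 a10 a20 a21 b10 b20 b21.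
rewrite x10 x20 x21 a10 a20 a21 b10 b20 ?add0r ?addr0 ?oppr0 in e1 e2 e3 e4 e5 e6.
have c01 : mxn x 0 1 = 0 by move: e2; rewrite mulrN1 => /eqP; rewrite oppr_eq0 => /eqP.
rewrite mulr0 in e3.
rewrite c01 e1 !addr0 in e4; rewrite e3 addr0 in e5.
have a0 : mxn s3 0 0 = 0.
  have : (3%:R : K) * mxn s3 0 0 = 0 by rewrite -tx e4 e5 e6; ring.
  by move/eqP; rewrite mulf_eq0 (negbTE n3) /= => /eqP.
rewrite a0 in e4 e5 e6.
apply/matrixP => i j; rewrite mxE (mxnE x).
by case: i => [[|[|[|//]]] ?]; case: j => [[|[|[|//]]] ?]; rewrite /=.
Qed.
End W.


Section M.
Variable K : fieldType.

Lemma unitSL (X : 'M[K]_3) : inSL3 X -> X \in unitmx.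
Proof. by rewrite unitmxE => /eqP ->; exact: unitr1. Qed.

Lemma conj_inj (A : 'M[K]_3) : A \in unitmx -> injective (fun s : 'M[K]_3 => A *m s *m invmx A).
Proof. by move=> U s s' /(can_inj (mulmxKV U)) /(can_inj (mulKmx U)). Qed.

Lemma Ad_inj (g : trip K) : inG g -> injective (Ad g).
Proof.
case: g => [[g1 g2] g3] /and3P [/unitSL U1 /unitSL U2 /unitSL U3].
move=> [[s1 s2] s3] [[t1 t2] t3]; rewrite /Ad /= => -[E1 E2 E3].
by rewrite (conj_inj U1 E1) (conj_inj U2 E2) (conj_inj U3 E3).
Qed.

Lemma dim_Ad_le (g : trip K) : (\dim (linfun (Ad g) @: bLie K) <= 15)%N.
Proof. by rewrite -(dim_bLie K) dim_img_le. Qed.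

Lemma dim_Ad (g : trip K) : inG g -> \dim (linfun (Ad g) @: bLie K) = 15%N.
Proof. by move=> Hg; rewrite inj_dim ?dim_bLie //; exact: Ad_inj. Qed.

Definition g0 : trip K := (1%:M, wmx K, umx K).
Lemma inG_g0 : inG g0.
Proof. by rewrite /inG /inSL3 /= det1 det_wmx det_umx eqxx. Qed.

Lemma disj_g0 : (3%:R : K) != 0 ->
  (hdiag K :&: linfun (Ad g0) @: bLie K = 0)%VS.
Proof.
move=> n3; apply/eqP; rewrite -subv0; apply/subvP => t; rewrite memv_cap memv0.
case/andP => /memv_imgP [x Hx ->] /memv_imgP [s Hs].
move: Hs; rewrite /bLie => /memv_addP [u /memv_addP [v1 /memv_imgP [s1 H1 ->] [v2 /memv_imgP [s2 H2 ->] ->]] [v3 /memv_imgP [s3 H3 ->] ->]].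
rewrite !lfunE /= /tdiag /Ad /inj1 /inj2 /inj3 /= => -[E1 E2 E3].
move: E1 E2 E3; rewrite !addr0 !add0r invmx1 mul1mx mulmx1 => E1 E2 E3.
have Uw : wmx K \in unitmx by apply: unitSL; rewrite /inSL3 det_wmx.
have Uu : umx K \in unitmx by apply: unitSL; rewrite /inSL3 det_umx.
have F2 : x *m wmx K = wmx K *m s2 by rewrite E2 mulmxKV.
have F3 : x *m umx K = umx K *m s3 by rewrite E3 mulmxKV.
move: Hx H1 H2 H3; rewrite mem_sl3 !mem_b3 => /eqP tx /andP [_ l1] /andP [_ l2] /andP [_ l3].
have -> : x = 0 by apply: (@key K x s2 s3 n3 tx) => //; rewrite E1.
by [].
Qed.

Lemma complexity1 : (3%:R : K) != 0 -> is_complexity (hdiag K) 1.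
Proof.
move=> n3; split.
- exists g0; first exact: inG_g0.
  rewrite /codim_at dim_gLie dimv_disjoint_sum ?disj_g0 // dim_hdiag dim_Ad //; exact: inG_g0.
- move=> g Hg; rewrite /codim_at dim_gLie.
  have := (dimv_add_leqif (hdiag K) (linfun (Ad g) @: bLie K)).1.
  rewrite dim_hdiag => H; rewrite subn_gt0 (leq_ltn_trans H) //.
  by rewrite -[24%N]/(8 + 16)%N ltn_add2l ltnS dim_Ad_le.
Qed.
End M.

Unset Implicit Arguments.

Theorem mainTheorem8 (K : closedFieldType) (char0 : [pchar K] =i pred0) :
  is_complexity (hdiag K) 1 /\ rank_GH K 6.
Proof.
split; last exact: rankW.
apply: complexity1.
by move/pcharf0P: char0 => ->.
Qed.
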